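(* Let $G=(V,E)$ be a network, $s,t\in V$, and $S\in[S_{min},1]$ any survivability bound. Let $\mathbb{L}=\bigcap_{\pi\in L^{(s,t)}}\pi$, where $L^{(s,t)}$ is the set of weight-shortest $s$–$t$ paths. Then there is a survivable connection $(\pi_1,\pi_2)$ that is an optimal solution of the CT-Constrained Survivability Min-QoS problem with bound $S$ and satisfies $\pi_1\cap\pi_2\subseteq\mathbb{L}$.
   Context: A network is a directed graph $G=(V,E)$ with $M=|E|$. Each link $e$ has failure probability $p_e\in(0,p_{max}]$ with $p_{max}<1$, and positive weight $w_e$. Let $S_{min}=(1-p_{max})^M$. It is assumed that $t$ is reachable from $s$. Paths are identified with link sets, and $W(\pi)=\sum_{e\in\pi}w_e$. A survivable connection is a pair $(\pi_1,\pi_2)$ of simple $s$–$t$ paths; the two paths may coincide. Its critical links are $\pi_1\cap\pi_2$. Its survivability level is $\prod_{e\in\pi_1\cap\pi_2}(1-p_e)$, equal to $1$ if empty. A weight-shortest $s$–$t$ path is an $s$–$t$ path of minimum weight. CT-CSMQ problem: minimize $W(\pi_1)+W(\pi_2)$ over survivable connections with survivability level $\ge S$. *)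

(* Defs.v *)
From HB Require Import structures.
From mathcomp Require Import all_boot all_order all_algebra.
Set Implicit Arguments. Unset Strict Implicit. Unset Printing Implicit Defensive.
Import Order.TTheory GRing.Theory Num.Theory.
Local Open Scope ring_scope.

Section Net.
Variables (V E : finType) (src dst : E -> V).

Fixpoint walk (x y : V) (es : seq E) : bool :=
  match es with
  | [::] => x == y
  | e :: es' => (src e == x) && walk (dst e) y es'
  end.

Definition simple_path_seq (s t : V) (es : seq E) : bool :=
  walk s t es && uniq (s :: map dst es).

(* A path is identified with its link set. *)
Definition st_path (s t : V) (A : {set E}) : Prop :=
  exists es : seq E, simple_path_seq s t es /\ A = [set e | e \in es].

Variable R : realFieldType.

Definition weight (w : E -> R) (A : {set E}) : R := \sum_(e in A) w e.

Definition shortest_path (w : E -> R) (s t : V) (A : {set E}) : Prop :=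
  st_path s t A /\ forall B, st_path s t B -> weight w A <= weight w B.

Definition surv_level (p : E -> R) (P1 P2 : {set E}) : R :=
  \prod_(e in P1 :&: P2) (1 - p e).

Definition feasible (p : E -> R) (s t : V) (S : R) (P1 P2 : {set E}) : Prop :=
  st_path s t P1 /\ st_path s t P2 /\ S <= surv_level p P1 P2.

Definition ctcsmq_optimal (p w : E -> R) (s t : V) (S : R) (P1 P2 : {set E}) : Prop :=
  feasible p s t S P1 P2 /\
  forall Q1 Q2, feasible p s t S Q1 Q2 ->
    weight w P1 + weight w P2 <= weight w Q1 + weight w Q2.

End Net.

(* Main.v *)
Require Import Defs.
From Stdlib Require Import Classical.
From HB Require Import structures.
From mathcomp Require Import all_boot all_order all_algebra.
From mathcomp Require Import ring lra zify.
Import Order.TTheory GRing.Theory Num.Theory.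
Set Implicit Arguments. Unset Strict Implicit. Unset Printing Implicit Defensive.
Ltac splitall := repeat match goal with |- _ /\ _ => split end.

Local Open Scope nat_scope.
Lemma walk_cat (V E : finType) (src dst : E -> V) x z y es1 es2 :
  walk src dst x z es1 -> walk src dst z y es2 -> walk src dst x y (es1 ++ es2).
Proof.
elim: es1 x => [|g es1 IH] x /=; first by move=> /eqP ->.
by case/andP=> -> h1 h2; rewrite (IH _ h1 h2).
Qed.

Lemma walk_catP (V E : finType) (src dst : E -> V) x y es1 es2 :
  walk src dst x y (es1 ++ es2) -> exists z, walk src dst x z es1 /\ walk src dst z y es2.
Proof.
elim: es1 x => [|g es1 IH] x /=; first by move=> h; exists x.
case/andP=> hg /IH [z [h1 h2]]; exists z; by rewrite hg h1.
Qed.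

Lemma walk_last (V E : finType) (src dst : E -> V) x y es :
  walk src dst x y es -> y \in x :: map dst es.
Proof.
elim: es x => [|g es IH] x /=; first by move=> /eqP ->; rewrite inE.
case/andP=> _ /IH hy; by rewrite inE hy orbT.
Qed.

Lemma walk_edge (V E : finType) (src dst : E -> V) x y es h :
  walk src dst x y es -> h \in es ->
  (src h \in x :: map dst es) && (dst h \in x :: map dst es).
Proof.
elim: es x => [|g es IH] x; first by [].
rewrite /= => /andP [/eqP hg hw]; rewrite inE => /orP [/eqP ->|hin].
  by rewrite hg !inE !eqxx orbT.
have /andP [h1 h2] := IH _ hw hin.
by move: h1 h2; rewrite !inE => -> ->; rewrite !orbT.
Qed.

Lemma walk_split (V E : finType) (src dst : E -> V) x y es u :
  walk src dst x y es -> u \in x :: map dst es ->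
  exists es1 es2, es = es1 ++ es2 /\ walk src dst x u es1 /\ walk src dst u y es2.
Proof.
elim: es x => [|g es IH] x /=.
  move=> /eqP hxy; rewrite inE => /eqP hu; subst.
  by exists [::], [::]; rewrite /= eqxx.
case/andP=> /eqP hg hw; rewrite inE => /orP [/eqP ->|hin].
  by exists [::], (g :: es); rewrite /= hg eqxx hw.
have [es1 [es2 [-> [h1 h2]]]] := IH _ hw hin.
by exists (g :: es1), es2; rewrite /= hg eqxx h1 h2.
Qed.

Lemma simple_uniq (V E : finType) (src dst : E -> V) x y es :
  simple_path_seq src dst x y es -> uniq es.
Proof.
by case/andP=> _ /= /andP [_ /map_uniq].
Qed.

Lemma shortcut (V E : finType) (src dst : E -> V) x y es :
  walk src dst x y es -> exists es',
    simple_path_seq src dst x y es' /\ {subset es' <= es}.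
Proof.
elim: es x => [|g es IH] x /=.
  by move=> /eqP ->; exists [::]; rewrite /simple_path_seq /= eqxx.
case/andP=> /eqP hg hw.
have [es' [/andP [hw' hu'] hsub]] := IH _ hw.
have sub2 : {subset es' <= g :: es} by move=> h hh; rewrite inE hsub ?orbT.
case hx: (x \in dst g :: map dst es').
  move: hx; rewrite inE => /orP [/eqP hxd|hx].
    exists es'; split=> //; by rewrite /simple_path_seq hxd hw' hu'.
  case/mapP: hx => h hin hxe.
  case/splitPr: hin hw' hu' sub2 => p1 p2 hw' hu' sub2.
  exists p2; split; last by move=> z hz; apply: sub2; rewrite mem_cat inE hz !orbT.
  have [z [_ ]] := walk_catP hw'.
  rewrite /= => /andP [/eqP _ hw2].
  rewrite /simple_path_seq hxe hw2 /=.
  move: hu'; rewrite map_cat /= => /andP [_]; rewrite cat_uniq => /and3P [_ _] //.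
exists (g :: es'); split.
rewrite /simple_path_seq /= hg eqxx hw' /=.
  move: hu' hx; rewrite /= => -> -> //.
by move=> h; rewrite !inE => /orP [->|/hsub ->]; rewrite ?orbT.
Qed.
Lemma firsthit (V E : finType) (src dst : E -> V) (Q : pred V) es c b :
  walk src dst c b es -> Q b -> exists ea eb w, es = ea ++ eb /\
   walk src dst c w ea /\ walk src dst w b eb /\ Q w /\
   (forall h, h \in ea -> ~~ Q (src h)).
Proof.
elim: es c => [|g es IH] c /=.
  move=> /eqP -> hb; exists [::], [::], b; by rewrite /= eqxx.
case/andP=> /eqP hg hw hb.
case hc: (Q c).
  exists [::], (g :: es), c; by rewrite /= hg eqxx hw hc.
have [ea [eb [w [-> [h1 [h2 [h3 h4]]]]]]] := IH _ hw hb.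
exists (g :: ea), eb, w; rewrite /= hg eqxx h1 h2 h3; do 4 split=> //.
by move=> h; rewrite inE => /orP [/eqP ->|/h4]; rewrite ?hg ?hc.
Qed.

Lemma bridge (V E : finType) (src dst : E -> V) (Pa Pb : pred V) n : forall es a b,
  size es <= n ->
  walk src dst a b es -> Pa a -> Pb b -> exists u v es1 es2 es3,
   es = es1 ++ es2 ++ es3 /\ walk src dst a u es1 /\ walk src dst u v es2 /\
   walk src dst v b es3 /\ Pa u /\ Pb v /\
   (forall h, h \in es2 -> (~~ Pa (src h) || ~~ Pa (dst h)) &&
                           (~~ Pb (src h) || ~~ Pb (dst h))).
Proof.
elim: n => [|n IH] es a b hs hw ha hb.
  case: es hs hw => // _ /= /eqP hab; subst.
  by exists b, b, [::], [::], [::]; rewrite /= eqxx.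
case hba: (Pb a).
  by exists a, a, [::], [::], es; rewrite /= eqxx hw ha hba.
case: es hs hw => [|g es] hs hw.
  by move: hw hb hba => /= /eqP -> ->.
move: hw => /= /andP [/eqP hg hw].
have [ea [eb [w [hes [h1 [h2 [h3 h4]]]]]]] := @firsthit _ _ src dst (predU Pa Pb) _ _ _ hw ltac:(by rewrite /= hb orbT).
case hwa: (Pa w).
  have hs' : size eb <= n by move: hs; rewrite hes /= size_cat; lia.
  have [u [v [e1 [e2 [e3 [heb [k1 [k2 [k3 [k4 [k5 k6]]]]]]]]]]] := IH eb w b hs' h2 hwa hb.
  exists u, v, (g :: ea ++ e1), e2, e3; rewrite hes heb /= -!catA; splitall => //.
  by rewrite hg eqxx (walk_cat h1 k1).
have hwb : Pb w by move: h3; rewrite /= hwa.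
exists a, w, [::], (g :: ea), eb; rewrite hes; splitall => //.
  by rewrite /= eqxx.
  by rewrite /= hg eqxx h1.
move=> h; rewrite inE => /orP [/eqP ->|/h4].
  rewrite hg hba /= andbT.
  case: ea h1 h4 {hes} => [|h0 ea] /=; first by move=> /eqP -> _; rewrite hwa orbT.
  case/andP=> /eqP <- _ h4; have := h4 h0; rewrite inE eqxx /= => /(_ isT).
  by rewrite negb_or => /andP [-> _]; rewrite orbT.
rewrite negb_or => /andP [-> ->]; done.
Qed.
Local Open Scope ring_scope.
Definition ws (E : finType) (R : realFieldType) (w : E -> R) (es : seq E) : R :=
  \sum_(e <- es) w e.

Lemma ws_cat (E : finType) (R : realFieldType) (w : E -> R) l1 l2 :
  ws w (l1 ++ l2) = ws w l1 + ws w l2.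
Proof. by rewrite /ws big_cat. Qed.

Lemma ws_cons (E : finType) (R : realFieldType) (w : E -> R) x l :
  ws w (x :: l) = w x + ws w l.
Proof. by rewrite /ws big_cons. Qed.

Lemma weight_sub (E : finType) (R : realFieldType) (w : E -> R) (A B : {set E}) :
  (forall e, 0 <= w e) -> A \subset B -> weight w A <= weight w B.
Proof.
move=> hw hAB; rewrite /weight [X in _ <= X](big_setID A) /=.
have -> : B :&: A = A by apply/setIidPr.
by rewrite lerDl sumr_ge0.
Qed.

Lemma weight_set_le (E : finType) (R : realFieldType) (w : E -> R) es :
  (forall e, 0 <= w e) -> weight w [set e | e \in es] <= ws w es.
Proof.
move=> hw; elim: es => [|x es IH].
  rewrite /weight /ws big_nil; rewrite (eq_bigl (fun _ => false)) ?big_pred0 //.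
  by move=> e; rewrite inE.
have -> : [set e | e \in x :: es] = x |: [set e | e \in es].
  by apply/setP => e; rewrite !inE.
rewrite ws_cons; case hx: (x \in [set e | e \in es]).
  have -> : x |: [set e | e \in es] = [set e | e \in es] by apply/setUidPr; rewrite sub1set hx.
  by apply: (le_trans IH); rewrite lerDr.
by rewrite /weight big_setU1 ?hx //= lerD2l.
Qed.

Lemma weight_set_uniq (E : finType) (R : realFieldType) (w : E -> R) es :
  uniq es -> weight w [set e | e \in es] = ws w es.
Proof.
move=> hu; rewrite /weight /ws big_uniq //; apply: eq_bigl => e; by rewrite inE.
Qed.

Lemma core (R : realFieldType) (V E : finType) (src dst : E -> V) (w : E -> R)
  (hw : forall e, 0 < w e) s t x y (e : E) (I : {set E}) (K : R)
  u v a1 a2 b1 b2 a' b' A1 A2 A3 :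
  src e = x -> dst e = y ->
  walk src dst s u a1 -> walk src dst u x a2 -> walk src dst y v b1 ->
  walk src dst v t b2 -> walk src dst s x a' -> walk src dst y t b' ->
  walk src dst s u A1 -> walk src dst u v A2 -> walk src dst v t A3 ->
  uniq (A1 ++ A2 ++ A3) ->
  (forall B, st_path src dst s t B -> weight w [set h | h \in A1 ++ A2 ++ A3] <= weight w B) ->
  (forall h, h \in a1 ++ A2 ++ b2 -> h \in a' ++ e :: b' -> h \in I) ->
  ws w (a1 ++ a2) + ws w (b1 ++ b2) + ws w a' + ws w b' + 2 * w e <= K ->
  exists Q1 Q2, st_path src dst s t Q1 /\ st_path src dst s t Q2 /\
    weight w Q1 + weight w Q2 <= K /\ Q1 :&: Q2 \subset I.
Proof.
move=> hx hy wa1 wa2 wb1 wb2 wa' wb' wA1 wA2 wA3 hu hsh hI hK.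
have hw0 : forall e, 0 <= w e by move=> f; apply/ltW.
have wC : walk src dst s t (A1 ++ (a2 ++ e :: b1) ++ A3).
  apply: (walk_cat wA1); apply: (walk_cat _ wA3); apply: (walk_cat wa2).
  by rewrite /= hx eqxx hy wb1.
have [B [sB subB]] := shortcut wC.
have hA2 : ws w A2 <= ws w a2 + w e + ws w b1.
  have h1 := hsh [set h | h \in B] (ex_intro _ B (conj sB erefl)).
  rewrite weight_set_uniq // !ws_cat in h1.
  have h2 : weight w [set h | h \in B] <= weight w [set h | h \in A1 ++ (a2 ++ e :: b1) ++ A3].
    apply: weight_sub => //; apply/subsetP => h; rewrite !inE; exact: subB.
  have h3 := weight_set_le (A1 ++ (a2 ++ e :: b1) ++ A3) hw0.
  rewrite !ws_cat ws_cons in h3.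
  lra.
have wQ1 : walk src dst s t (a1 ++ A2 ++ b2).
  by apply: (walk_cat wa1); apply: (walk_cat wA2).
have wQ2 : walk src dst s t (a' ++ e :: b').
  by apply: (walk_cat wa'); rewrite /= hx eqxx hy wb'.
have [B1 [sB1 subB1]] := shortcut wQ1.
have [B2 [sB2 subB2]] := shortcut wQ2.
exists [set h | h \in B1], [set h | h \in B2]; split; first by exists B1.
split; first by exists B2.
split.
  have k1 : weight w [set h | h \in B1] <= ws w (a1 ++ A2 ++ b2).
    apply: le_trans (weight_set_le _ hw0); apply: weight_sub => //.
    apply/subsetP => h; rewrite !inE; exact: subB1.
  have k2 : weight w [set h | h \in B2] <= ws w (a' ++ e :: b').
    apply: le_trans (weight_set_le _ hw0); apply: weight_sub => //.
    apply/subsetP => h; rewrite !inE; exact: subB2.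
  rewrite !ws_cat ws_cons in k1 k2 hK.
  lra.
apply/subsetP => h; rewrite !inE => /andP [h1 h2].
by apply: hI; [apply: subB1 h1 | apply: subB2 h2].
Qed.
Lemma hI_gen (E : finType) (e : E) (a1 b1 a2 b2 A2 : seq E) (i j : bool) h :
  uniq (a1 ++ e :: b1) -> uniq (a2 ++ e :: b2) -> e \notin A2 ->
  (forall h, h \in A2 -> h \notin a1 ++ b1 ++ a2 ++ b2) ->
  h \in (if i then a1 else a2) ++ A2 ++ (if j then b1 else b2) ->
  h \in (if ~~ i then a1 else a2) ++ e :: (if ~~ j then b1 else b2) ->
  h \in ([set x | x \in a1 ++ e :: b1] :&: [set x | x \in a2 ++ e :: b2]) :\ e.
Proof.
rewrite !cat_uniq /= => /and3P [_ /norP [ea1 /hasPn d1] /andP [eb1 _]].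
move=> /and3P [_ /norP [ea2 /hasPn d2] /andP [eb2 _]] eA hA.
have d1' : h \in b1 -> h \notin a1 by move/d1.
have d2' : h \in b2 -> h \notin a2 by move/d2.
have hA' := hA h; move: hA'; rewrite !mem_cat.
rewrite !inE !mem_cat !inE.
have ne : h \in A2 -> h != e by move=> hh; apply/eqP => he; move: eA; rewrite -he hh.
have ne1 : h \in a1 -> h != e by move=> hh; apply/eqP => he; move: ea1; rewrite -he hh.
have ne2 : h \in a2 -> h != e by move=> hh; apply/eqP => he; move: ea2; rewrite -he hh.
have ne3 : h \in b1 -> h != e by move=> hh; apply/eqP => he; move: eb1; rewrite -he hh.
have ne4 : h \in b2 -> h != e by move=> hh; apply/eqP => he; move: eb2; rewrite -he hh.
move: ne ne1 ne2 ne3 ne4 d1' d2'.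
case: i; case: j => /=;
case: (h \in A2); case: (h \in a1); case: (h \in a2); case: (h \in b1); case: (h \in b2);
  case: (h == e) => //=; by move=> ? ? ? ? ? ? ? ? ? ? ? ?; intuition.
Qed.

Lemma step (R : realFieldType) (V E : finType) (src dst : E -> V) (w : E -> R)
  (hw : forall e, 0 < w e) s t (e : E) a1 b1 a2 b2 es :
  simple_path_seq src dst s t (a1 ++ e :: b1) ->
  simple_path_seq src dst s t (a2 ++ e :: b2) ->
  simple_path_seq src dst s t es -> e \notin es ->
  (forall B, st_path src dst s t B -> weight w [set h | h \in es] <= weight w B) ->
  exists Q1 Q2, st_path src dst s t Q1 /\ st_path src dst s t Q2 /\
    weight w Q1 + weight w Q2 <= weight w [set h | h \in a1 ++ e :: b1] + weight w [set h | h \in a2 ++ e :: b2] /\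
    Q1 :&: Q2 \subset ([set x | x \in a1 ++ e :: b1] :&: [set x | x \in a2 ++ e :: b2]) :\ e.
Proof.
move=> sp1 sp2 spA eA hsh.
have u1 := simple_uniq sp1; have u2 := simple_uniq sp2; have uA := simple_uniq spA.
case/andP: sp1 => w1 _; case/andP: sp2 => w2 _; case/andP: spA => wA _.
have [z1 [wa1 /= /andP [/eqP hz1 wb1]]] := walk_catP w1.
have [z2 [wa2 /= /andP [/eqP hz2 wb2]]] := walk_catP w2.
subst z1 z2.
pose Pa := [pred z | (z \in s :: map dst a1) || (z \in s :: map dst a2)].
pose Pb := [pred z | (z \in dst e :: map dst b1) || (z \in dst e :: map dst b2)].
have Pas : Pa s by rewrite /= !inE eqxx.
have Pbt : Pb t by rewrite /= (walk_last wb1).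
have [u [v [A1 [A2 [A3 [hes [wA1 [wA2 [wA3 [hu [hv hprop]]]]]]]]]]] :=
  @bridge _ _ src dst Pa Pb (size es) es s t (leqnn _) wA Pas Pbt.
have [i hi] : exists i : bool, u \in s :: map dst (if i then a1 else a2).
  by case/orP: hu => h; [exists true | exists false].
have [j hj] : exists j : bool, v \in dst e :: map dst (if j then b1 else b2).
  by case/orP: hv => h; [exists true | exists false].
have Wa : forall k : bool, walk src dst s (src e) (if k then a1 else a2) by case.
have Wb : forall k : bool, walk src dst (dst e) t (if k then b1 else b2) by case.
have wai := Wa i; have wai' := Wa (~~ i); have wbj := Wb j; have wbj' := Wb (~~ j).
have [c1 [c2 [hc [wc1 wc2]]]] := walk_split wai hi.
have [d1 [d2 [hd [wd1 wd2]]]] := walk_split wbj hj.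
have hA : forall h, h \in A2 -> h \notin a1 ++ b1 ++ a2 ++ b2.
  move=> h hh; have /andP [k1 k2] := hprop h hh.
  rewrite !mem_cat; apply/negP => /or4P [] hm.
  - have /andP [m1 m2] := walk_edge wa1 hm.
    by move: k1; rewrite /= m1 m2.
  - have /andP [m1 m2] := walk_edge wb1 hm.
    by move: k2; rewrite /= m1 m2.
  - have /andP [m1 m2] := walk_edge wa2 hm.
    by move: k1; rewrite /= m1 m2 !orbT.
  - have /andP [m1 m2] := walk_edge wb2 hm.
    by move: k2; rewrite /= m1 m2 !orbT.
have eA2 : e \notin A2 by move: eA; rewrite hes !mem_cat negb_or => /andP [_]; rewrite negb_or => /andP [].
apply: (@core R V E src dst w hw s t (src e) (dst e) e _ _ u v c1 c2 d1 d2
   (if ~~ i then a1 else a2) (if ~~ j then b1 else b2) A1 A2 A3) => //.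
- by rewrite -hes.
- by rewrite -hes.
- move=> h hh1 hh2; apply: (hI_gen (i:=i) (j:=j) (A2:=A2)) => //.
  by rewrite hc hd; move: hh1; rewrite !mem_cat => /or3P [->|->|->]; rewrite ?orbT.
- rewrite -hc -hd !weight_set_uniq // !ws_cat !ws_cons.
  by case: i {hi wai wai' hc}; case: j {hj wbj wbj' hd} => /=; lra.
Qed.
Lemma reduce (R : realFieldType) (V E : finType) (src dst : E -> V) (w : E -> R)
  (hw : forall e, 0 < w e) s t n : forall P1 P2 : {set E},
  (#|P1 :&: P2| <= n)%N -> st_path src dst s t P1 -> st_path src dst s t P2 ->
  exists Q1 Q2, st_path src dst s t Q1 /\ st_path src dst s t Q2 /\
    weight w Q1 + weight w Q2 <= weight w P1 + weight w P2 /\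
    Q1 :&: Q2 \subset P1 :&: P2 /\
    (forall e, e \in Q1 :&: Q2 -> forall A, shortest_path src dst w s t A -> e \in A).
Proof.
elim: n => [|n IH] P1 P2 hn sp1 sp2.
  exists P1, P2; do 4 (split=> //).
  move=> e he; move: hn; rewrite leqn0 => /eqP /cards0_eq h0.
  by move: he; rewrite h0 inE.
case: (classic (exists e, e \in P1 :&: P2 /\
                 exists A, shortest_path src dst w s t A /\ e \notin A)) => [[e [he [A [[spA hA] eA]]]]|hno].
  have [p1 [hp1 ep1]] := sp1; have [p2 [hp2 ep2]] := sp2.
  have [q [hq eq]] := spA.
  have he1 : e \in p1 by move: he; rewrite inE ep1 inE => /andP [].
  have he2 : e \in p2 by move: he; rewrite inE ep2 => /andP [_ h]; move: h; rewrite inE.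
  have eq' : e \notin q by move: eA; rewrite eq inE.
  move: hp1 hp2 ep1 ep2; case/splitPr: he1 => a1 b1; case/splitPr: he2 => a2 b2 hp1 hp2 ep1 ep2.
  have hsh : forall B, st_path src dst s t B -> weight w [set h | h \in q] <= weight w B.
    by move=> B hB; rewrite -eq; apply: hA.
  have [Q1 [Q2 [sQ1 [sQ2 [wQ sub]]]]] := step hw hp1 hp2 hq eq' hsh.
  rewrite -ep1 -ep2 in wQ sub.
  have hcard : (#|Q1 :&: Q2| <= n)%N.
    have := subset_leq_card sub; rewrite (cardsD1 e (P1 :&: P2)) he in hn; lia.
  have [R1 [R2 [sR1 [sR2 [wR [subR hR]]]]]] := IH Q1 Q2 hcard sQ1 sQ2.
  exists R1, R2; do 2 (split=> //); split; first by lra.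
  split=> //; apply: (subset_trans subR); apply: (subset_trans sub); exact: subD1set.
exists P1, P2; do 4 (split=> //).
move=> e he A hA; apply/negPn/negP => hn'; apply: hno; exists e; split=> //; by exists A.
Qed.

Lemma exmin (R : realFieldType) (T : finType) (P : T -> Prop) (f : T -> R) :
  (exists x, P x) -> exists x, P x /\ forall y, P y -> f x <= f y.
Proof.
move=> [x0 hx0].
suff : forall l : seq T, (exists x, x \in l /\ P x) ->
  exists x, P x /\ forall y, y \in l -> P y -> f x <= f y.
  move=> /(_ (enum T)) []; first by exists x0; rewrite mem_enum.
  move=> m [hm1 hm2]; exists m; split=> // y hy; apply: hm2 => //; by rewrite mem_enum.
elim=> [|a l IH]; first by move=> [x []].
move=> hex.
case: (classic (exists x, x \in l /\ P x)) => [/IH [m [hm1 hm2]]|hno].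
  case: (classic (P a)) => ha.
    case: (lerP (f a) (f m)) => hc.
      exists a; split=> // y; rewrite inE => /orP [/eqP ->|hy] hPy //.
      by apply: (le_trans hc); apply: hm2.
    exists m; split=> // y; rewrite inE => /orP [/eqP ->|hy] hPy; last by apply: hm2.
    exact: ltW.
  exists m; split=> // y; rewrite inE => /orP [/eqP ->|hy] hPy //; last by apply: hm2.
have ha : P a.
  case: hex => x [hx hPx]; move: hx; rewrite inE => /orP [/eqP <- //|hx].
  by case: hno; exists x.
exists a; split=> // y; rewrite inE => /orP [/eqP ->|hy] hPy //.
by case: hno; exists y.
Qed.

Lemma surv_mono (R : realFieldType) (E : finType) (p : E -> R) (P1 P2 Q1 Q2 : {set E}) :
  (forall e, 0 < p e < 1) -> Q1 :&: Q2 \subset P1 :&: P2 ->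
  surv_level p P1 P2 <= surv_level p Q1 Q2.
Proof.
move=> hp hsub; rewrite /surv_level (big_setID (Q1 :&: Q2)) /=.
have -> : P1 :&: P2 :&: (Q1 :&: Q2) = Q1 :&: Q2 by apply/setIidPr.
have h01 : forall e, 0 <= 1 - p e <= 1.
  by move=> e; have /andP [a b] := hp e; apply/andP; split; lra.
apply: ler_piMr.
  by apply: prodr_ge0 => e _; have /andP [] := h01 e.
by apply: prodr_ile1 => e _; exact: h01.
Qed.

Theorem corollary1 (R : realFieldType) (V E : finType) (src dst : E -> V)
  (p w : E -> R) (pmax : R) (s t : V) (S : R)
  (hp : forall e, 0 < p e /\ p e <= pmax) (hpmax : pmax < 1)
  (hw : forall e, 0 < w e)
  (hreach : exists A, st_path src dst s t A)
  (hS : (1 - pmax) ^+ #|E| <= S /\ S <= 1)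
  (hfeas : exists P1 P2, feasible src dst p s t S P1 P2) :
  exists P1 P2 : {set E},
    ctcsmq_optimal src dst p w s t S P1 P2 /\
    (forall e, e \in P1 :&: P2 ->
       forall A, shortest_path src dst w s t A -> e \in A).
Proof.
have hp' : forall e, 0 < p e < 1.
  by move=> e; have [a b] := hp e; apply/andP; split; [|apply: le_lt_trans hpmax].
have hf : exists q : {set E} * {set E}, feasible src dst p s t S q.1 q.2.
  by case: hfeas => P1 [P2 h]; exists (P1, P2).
have [[P1 P2] [[fs1 [fs2 fsv]] hmin]] :=
  exmin (fun q : {set E} * {set E} => weight w q.1 + weight w q.2) hf.
have [Q1 [Q2 [sQ1 [sQ2 [wQ [subQ hQ]]]]]] := reduce hw (leqnn #|P1 :&: P2|) fs1 fs2.
exists Q1, Q2; split=> //; split.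
  split=> //; split=> //; apply: le_trans fsv _; exact: surv_mono.
move=> R1 R2 hR; apply: le_trans wQ _; exact: (hmin (R1, R2) hR).
Qed.
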